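(* Fix $t\in\mathbb{C}$, $t\neq0$, and four-end tangles $T_1,T_2$. (i) Let $\rho$ be a trace-$t$ representation of $T_1*_vT_2$ with $u(\rho)\notin\{2,t^2-2\}$, and let $\dot u_i=\dot u(\rho|_{T_i})$, $\check u_i=\check u(\rho|_{T_i})$. Then $\dot{\mathbf{g}}=\mathbf{e}$ (where $\dot{\mathbf{g}}=\mathbf{x}^{\mathrm{ne}}\mathbf{x}^{\mathrm{se}}$ for $\rho$ on $T_1*_vT_2$) if and only if $\dot u_1=\dot u_2$ and $\check u_1+\check u_2=0$. (ii) Let $\rho$ be a trace-$t$ representation of $T_1*_hT_2$ with $\dot u(\rho)\notin\{2,t^2-2\}$, and let $u_i=u(\rho|_{T_i})$, $\check u_i=\check u(\rho|_{T_i})$. Then $\mathbf{g}=\mathbf{e}$ (where $\mathbf{g}=\mathbf{x}^{\mathrm{nw}}\mathbf{x}^{\mathrm{ne}}$ for $\rho$ on $T_1*_hT_2$) if and only if $u_1=u_2$ and $\check u_1+\check u_2=0$.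
   Context: $G=\mathrm{SL}(2,\mathbb{C})$, $\mathbf{e}$ the identity, $G(t)=\{\mathbf{x}\in G:\mathrm{tr}\,\mathbf{x}=t\}$. A four-end tangle $T$ is a tangle diagram in a disk (a 1-submanifold of a 3-ball $B$ meeting $\partial B$ in four points) with endpoints at the northwest, northeast, southwest, southeast; the end arcs, directed outward, are $T^{\mathrm{nw}},T^{\mathrm{ne}},T^{\mathrm{sw}},T^{\mathrm{se}}$. A representation of $T$ is a map $\rho$ from directed arcs to $G$ with $\rho(a^{-1})=\rho(a)^{-1}$ satisfying the Wirtinger relation $\rho(c)=\rho(a)\rho(b)\rho(a)^{-1}$ at each crossing (over-arc $a$); equivalently a homomorphism $\pi_1(B\setminus T)\to G$. It is trace-$t$ if every $\rho(a)\in G(t)$. With $\mathbf{x}^{\mathrm{ot}}=\rho(T^{\mathrm{ot}})$: $u=\mathrm{tr}(\mathbf{x}^{\mathrm{nw}}\mathbf{x}^{\mathrm{ne}})$, $\dot u=\mathrm{tr}(\mathbf{x}^{\mathrm{ne}}\mathbf{x}^{\mathrm{se}})$, $\check u=\mathrm{tr}(\mathbf{x}^{\mathrm{nw}}\mathbf{x}^{\mathrm{se}})-\mathrm{tr}(\mathbf{x}^{\mathrm{sw}}\mathbf{x}^{\mathrm{ne}})$. Vertical composition $T_1*_vT_2$: $T_1$ above $T_2$, SW (resp. SE) endpoint of $T_1$ joined to NW (resp. NE) endpoint of $T_2$. Horizontal composition $T_1*_hT_2$: $T_1$ left of $T_2$, NE (resp. SE) endpoint of $T_1$ joined to NW (resp.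 SW) endpoint of $T_2$. $\rho|_{T_i}$ denotes restriction. (Representations with $\dot{\mathbf{g}}=\mathbf{e}$, resp. $\mathbf{g}=\mathbf{e}$, are exactly representations of the denominator closure $D(T)$, joining NW to SW and NE to SE, resp. numerator closure $N(T)$, joining NW to NE and SW to SE.) *)

(* Defs.v *)
(* Complex numbers are modelled as [R[i]] (mathcomp-real-closed
   [complex]) over an arbitrary [R : realType]; every realType is a complete
   archimedean ordered field, i.e. a copy of the reals, so [R[i]] is a copy of C. *)
From HB Require Import structures.
From mathcomp Require Import all_boot all_order all_algebra.
From mathcomp Require Import reals.
From mathcomp Require Import complex.
Set Implicit Arguments. Unset Strict Implicit. Unset Printing Implicit Defensive.
Import Order.TTheory GRing.Theory Num.Theory.
Local Open Scope ring_scope.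

(* Four-end tangle diagrams, in Morse ("stacked") form.                      *)
(* A diagram is read from top to bottom as a word of elementary moves acting  *)
(* on a row of strand positions 0,1,...,w-1 (left to right):                  *)
(*  - [Cross i true]  : strands at positions i,i+1 cross; the over-strand goes *)
(*                      from top-left (i) to bottom-right (i+1);             *)
(*  - [Cross i false] : same, the over-strand goes from top-right (i+1) to    *)
(*                      bottom-left (i);                                     *)
(*  - [Cup i]         : a local maximum creating two new strands at positions *)
(*                      i,i+1 (needs i <= w);                                *)
(*  - [Cap i]         : a local minimum joining the strands at positions i,i+1.*)
(* Every tangle diagram in a disk is planar isotopic to such a word.  A       *)
(* four-end tangle starts with 2 strands (NW, NE) and ends with 2 (SW, SE).   *)

Inductive move := Cross of nat & bool | Cup of nat | Cap of nat.

Definition move_width (w : nat) (m : move) : option nat :=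
  match m with
  | Cross i _ => if (i.+1 < w)%N then Some w else None
  | Cup i => if (i <= w)%N then Some w.+2 else None
  | Cap i => if (i.+1 < w)%N then Some w.-2 else None
  end.

Fixpoint word_width (w : nat) (s : seq move) : option nat :=
  match s with
  | [::] => Some w
  | m :: s' => if move_width w m is Some w' then word_width w' s' else None
  end.

Definition tangle := seq move.

Definition is_tangle (T : tangle) : Prop := word_width 2 T = Some 2%N.

Definition shift_move (k : nat) (m : move) : move :=
  match m with
  | Cross i b => Cross (i + k) b
  | Cup i => Cup (i + k)
  | Cap i => Cap (i + k)
  end.

(* T1 above T2, SW/SE of T1 joined to NW/NE of T2. *)
Definition vcomp (T1 T2 : tangle) : tangle := T1 ++ T2.

(* T1 left of T2: an arc (Cup 1) joins NE of T1 to NW of T2 at the top, T1 is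
   performed on the left strands, then T2 on the right strands, and an arc
   (Cap 1) joins SE of T1 to SW of T2 at the bottom. *)
Definition hcomp (T1 T2 : tangle) : tangle :=
  Cup 1 :: T1 ++ map (shift_move 2) T2 ++ [:: Cap 1].

(* Representations.  A representation is recorded level by level: level k is *)
(* the row of matrices rho(a) for the strands between move k-1 and move k,    *)
(* each arc being directed DOWNWARD (the opposite direction gets the          *)
(* inverse, rho(a^-1) = rho(a)^-1).  Same arc => same matrix; a cup/cap turns *)
(* the direction around (hence the inverse); at a crossing with over-arc a    *)
(* and under-arc passing from b (above) to c (below) the Wirtinger relation   *)
(* is c = a b a^-1 (resp. its mirror c = a^-1 b a for the mirror crossing).   *)

Section Rep.
Variable F : comUnitRingType.
Notation M := ('M[F]_2).

Definition inSL2 (x : M) : bool := \det x == 1.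

Definition step (m : move) (l l' : seq M) : Prop :=
  match m with
  | Cross i true =>
      let a := nth 0 l i in let b := nth 0 l i.+1 in
      l' = take i l ++ [:: a * b * a^-1; a] ++ drop i.+2 l
  | Cross i false =>
      let b := nth 0 l i in let a := nth 0 l i.+1 in
      l' = take i l ++ [:: a; a^-1 * b * a] ++ drop i.+2 l
  | Cup i => exists y : M, l' = take i l ++ [:: y; y^-1] ++ drop i l
  | Cap i => nth 0 l i.+1 = (nth 0 l i)^-1 /\ l' = take i l ++ drop i.+2 l
  end.

Definition is_rep (T : tangle) (L : seq (seq M)) : Prop :=
  [/\ size L = (size T).+1,
      size (nth [::] L 0) = 2%N,
      (forall k, (k < size L)%N -> all inSL2 (nth [::] L k)) &
      (forall k, (k < size T)%N -> step (nth (Cap 0) T k) (nth [::] L k) (nth [::] L k.+1))].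

Definition is_trace_rep (t : F) (T : tangle) (L : seq (seq M)) : Prop :=
  is_rep T L /\ (forall k, (k < size L)%N -> all (fun x => \tr x == t) (nth [::] L k)).

(* End arcs, directed outward: upward at the top, downward at the bottom. *)
Definition top (L : seq (seq M)) := nth [::] L 0.
Definition bot (L : seq (seq M)) := last [::] L.
Definition x_nw (L : seq (seq M)) : M := (nth 0 (top L) 0)^-1.
Definition x_ne (L : seq (seq M)) : M := (nth 0 (top L) 1)^-1.
Definition x_sw (L : seq (seq M)) : M := nth 0 (bot L) 0.
Definition x_se (L : seq (seq M)) : M := nth 0 (bot L) 1.

Definition u_inv (L : seq (seq M)) : F := \tr (x_nw L * x_ne L).
Definition ud_inv (L : seq (seq M)) : F := \tr (x_ne L * x_se L).
Definition uc_inv (L : seq (seq M)) : F :=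
  \tr (x_nw L * x_se L) - \tr (x_sw L * x_ne L).

Definition g_elt (L : seq (seq M)) : M := x_nw L * x_ne L.
Definition gd_elt (L : seq (seq M)) : M := x_ne L * x_se L.

Definition vres1 (T1 : tangle) (L : seq (seq M)) := take (size T1).+1 L.
Definition vres2 (T1 : tangle) (L : seq (seq M)) := drop (size T1) L.
Definition hres1 (T1 : tangle) (L : seq (seq M)) :=
  [seq take (size l - 2) l | l <- take (size T1).+1 (drop 1 L)].
Definition hres2 (T1 T2 : tangle) (L : seq (seq M)) :=
  [seq drop 2 l | l <- take (size T2).+1 (drop (size T1).+1 L)].

End Rep.

(* Main.v *)
Require Import Defs.
From HB Require Import structures.
From mathcomp Require Import all_boot all_order all_algebra.
From mathcomp Require Import reals complex.
From mathcomp Require Import ring zify.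
Import Order.TTheory GRing.Theory Num.Theory.
Local Open Scope ring_scope.

Section S.
Variable F : numFieldType.
Implicit Types A B m y d x a b c p q X : 'M[F]_2.

Lemma sum2 (f : 'I_2 -> F) : \sum_(i < 2) f i = f 0 + f 1.
Proof. rewrite !big_ord_recl big_ord0 addr0; by congr (f _ + f _); apply/val_inj. Qed.
Lemma det22 A : \det A = A 0 0 * A 1 1 - A 0 1 * A 1 0.
Proof.
rewrite (expand_det_row _ 0) sum2 /cofactor !det_mx11 !mxE /=.
rewrite expr0 expr1 /=.
have -> : lift 0 (0:'I_1) = 1 :> 'I_2 by apply/val_inj.
have -> : lift 1 (0:'I_1) = 0 :> 'I_2 by apply/val_inj.
by rewrite mul1r mulN1r mulrN.
Qed.
Lemma tr22 A : \tr A = A 0 0 + A 1 1.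
Proof. by rewrite /mxtrace sum2. Qed.
Lemma mul22 A B i j : (A * B) i j = A i 0 * B 0 j + A i 1 * B 1 j.
Proof. by rewrite -mulmxE mxE sum2. Qed.
Lemma ord2 (i : 'I_2) : i = 0 \/ i = 1.
Proof. case: i => [[|[|//]] Hi]; [left|right]; exact/val_inj. Qed.
Lemma one22 i j : (1 : 'M[F]_2) i j = (i == j)%:R.
Proof. by rewrite mxE. Qed.

Ltac mx_ext := apply/matrixP; let i := fresh "i" in let j := fresh "j" in
  intros i j; case: (ord2 i) => ->; case: (ord2 j) => ->;
  rewrite ?(mul22, mxE, one22, sum2) /= ?mulr1n ?mulr0n.

Lemma inv_sl2 A : \det A = 1 -> A^-1 = (\tr A)%:M - A.
Proof.
move=> dA.
have uA : A \is a GRing.unit by rewrite unitmxE dA unitr1.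
have H : A * ((\tr A)%:M - A) = 1.
  move: dA; rewrite det22 tr22 => dA.
  by mx_ext; [rewrite -dA; ring | ring | ring | rewrite -dA; ring].
by rewrite -[LHS]mulr1 -H mulKr.
Qed.

Lemma detcomm m y : \det (m * y - y * m) = 4 * \det m * \det y - (\tr m)^+2 * \det y
  - (\tr y)^+2 * \det m - (\tr (m * y))^+2 + \tr m * \tr y * \tr (m * y).
Proof. rewrite !det22 !tr22 !(mxE, mul22, sum2); ring. Qed.

Lemma core_id (d m y : 'M[F]_2) :
  let c := m * y - y * m in
  (8 * \det c) *: d =
  - (((4 * \tr (d * m) - 2 * \tr d * \tr m) *: (2 *: y - (\tr y)%:M)
     - (4 * \tr (d * y) - 2 * \tr d * \tr y) *: (2 *: m - (\tr m)%:M)) * c)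
  - (4 * \tr d) *: (c * c) - (4 * \tr (d * c)) *: c.
Proof. move=> c; rewrite /c; mx_ext; rewrite !det22 !tr22 !(mxE, mul22, sum2) /= ?mulr1n ?mulr0n; ring. Qed.


Lemma core X1 X2 m y :
  \tr X1 = \tr X2 -> \tr (X1 * m) = \tr (X2 * m) -> \tr (X1 * y) = \tr (X2 * y) ->
  \tr (X1 * (m * y - y * m)) = \tr (X2 * (m * y - y * m)) ->
  \det (m * y - y * m) != 0 -> X1 = X2.
Proof.
move=> h0 h1 h2 h3 hd.
have E := core_id (X1 - X2) m y; rewrite /= in E.
have t0 : \tr (X1 - X2) = 0 by rewrite raddfB /= h0 subrr.
have t1 : \tr ((X1 - X2) * m) = 0 by rewrite mulrBl raddfB /= h1 subrr.
have t2 : \tr ((X1 - X2) * y) = 0 by rewrite mulrBl raddfB /= h2 subrr.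
have t3 : \tr ((X1 - X2) * (m * y - y * m)) = 0 by rewrite mulrBl raddfB /= h3 subrr.
rewrite t0 t1 t2 t3 !(mulr0, mul0r, subrr, scale0r, oppr0, subr0) in E.
move/eqP: E; rewrite scaler_eq0 => /orP [|].
  by rewrite mulf_eq0 (negbTE hd) orbF pnatr_eq0.
by rewrite subr_eq0 => /eqP.
Qed.

Lemma trC A B : \tr (A * B) = \tr (B * A).
Proof. exact: mxtrace_mulC. Qed.

Lemma unit_sl2 x : \det x = 1 -> x \is a GRing.unit.
Proof. by move=> dx; rewrite unitmxE dx unitr1. Qed.

Lemma trV x : \det x = 1 -> \tr x^-1 = \tr x.
Proof. by move=> dx; rewrite inv_sl2 // raddfB /= mxtrace_scalar mulr2n addrK. Qed.

Lemma detV x : \det x = 1 -> \det x^-1 = 1.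
Proof. by move=> dx; rewrite [x^-1]/(invmx x) det_inv dx invr1. Qed.

Lemma detM2 x y : \det x = 1 -> \det y = 1 -> \det (x * y) = 1.
Proof. by move=> dx dy; rewrite detM dx dy mulr1. Qed.

Lemma trinvL x y : \det x = 1 -> \tr (x^-1 * y) = \tr x * \tr y - \tr (x * y).
Proof.
move=> dx; rewrite inv_sl2 // mulrBl raddfB /= -mulmxE mul_scalar_mx mxtraceZ.
by [].
Qed.

Lemma trinvR x y : \det y = 1 -> \tr (x * y^-1) = \tr x * \tr y - \tr (x * y).
Proof.
move=> dy; rewrite inv_sl2 // mulrBr raddfB /= -mulmxE mul_mx_scalar mxtraceZ.
by rewrite mulrC.
Qed.

Lemma det_nonzero (t u : F) : u != 2 -> u != t ^+ 2 - 2 ->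
  4 * 1 * 1 - u ^+ 2 * 1 - t ^+ 2 * 1 - t ^+ 2 + u * t * t != 0.
Proof.
move=> h1 h2.
have -> : 4 * 1 * 1 - u ^+ 2 * 1 - t ^+ 2 * 1 - t ^+ 2 + u * t * t
   = (2 - u) * (2 + u - t ^+ 2) by ring.
rewrite mulf_neq0 //; first by rewrite subr_eq0 eq_sym.
rewrite -subr_eq0 in h2.
apply: contra h2 => /eqP h; apply/eqP; rewrite -h; ring.
Qed.

Lemma algV (t : F) a0 a1 a b c d :
  \det a0 = 1 -> \det a1 = 1 -> \det a = 1 -> \det b = 1 -> \det c = 1 -> \det d = 1 ->
  \tr a0 = t -> \tr a1 = t -> \tr a = t -> \tr b = t -> \tr c = t -> \tr d = t ->
  a0 * a1 = a * b -> a * b = c * d ->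
  \tr (a0^-1 * a1^-1) != 2 -> \tr (a0^-1 * a1^-1) != t ^+ 2 - 2 ->
  (a1^-1 * d = 1 <->
   (\tr (a1^-1 * b) = \tr (b^-1 * d) /\
    (\tr (a0^-1 * b) - \tr (a * a1^-1)) + (\tr (a^-1 * d) - \tr (c * b^-1)) = 0)).
Proof.
move=> da0 da1 da db dc dd ta0 ta1 ta tb tc td g1 g2 hu1 hu2.
have ua0 := unit_sl2 _ da0; have ua1 := unit_sl2 _ da1; have ua := unit_sl2 _ da.
have ub := unit_sl2 _ db; have uc := unit_sl2 _ dc; have ud := unit_sl2 _ dd.
pose m := (a * b)^-1.
have Ea0 : a0^-1 = a1 * m by rewrite /m -g1 invrM // mulVKr.
have Ea : a^-1 = b * m by rewrite /m invrM // mulVKr.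
have Ec : c^-1 = d * m by rewrite /m g2 invrM // mulVKr.
have dm : \det m = 1 by rewrite /m detV // detM2.
have trm : \tr m = \tr (a0^-1 * a1^-1) by rewrite trC -invrM // g1.
have trmb : \tr (m * b) = t by rewrite trC -Ea trV.
have hdet : \det (m * b - b * m) != 0.
  by rewrite detcomm dm db trmb tb trm det_nonzero.
have eq1 : \tr (a1^-1 * b) = \tr (b^-1 * d) <-> \tr (a1 * b) = \tr (d * b).
  rewrite trinvL // (trC _ d) trinvR // ta1 tb td.
  by split => [/subrI //|->].
have eq2 : (\tr (a0^-1 * b) - \tr (a * a1^-1)) + (\tr (a^-1 * d) - \tr (c * b^-1))
    = \tr (a1 * (m * b - b * m)) - \tr (d * (m * b - b * m)).
  have -> : a * a1^-1 = (a1 * a^-1)^-1 by rewrite invrM ?unitrV // invrK.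
  have -> : c * b^-1 = (b * c^-1)^-1 by rewrite invrM ?unitrV // invrK.
  rewrite !trV ?detM2 ?detV // Ea0 Ea Ec.
  rewrite !mulrBr !raddfB /= !mulrA.
  rewrite (trC (b * m) d) -(mulrA b d m) (trC b (d * m)) !mulrA; ring.
rewrite eq2; split.
  move=> H; have Hd : d = a1 by rewrite -[d](mulVKr ua1) H mulr1.
  split; last by rewrite Hd subrr.
  by apply/eq1; rewrite Hd.
case=> /eq1 h1 h2; have Hd : a1 = d.
  apply: (core a1 d m b); rewrite ?ta1 ?td //.
  - by rewrite -Ea0 -Ec !trV // ta0 tc.
  - by apply/eqP; rewrite -subr_eq0 h2.
by rewrite -Hd mulVr.
Qed.


Lemma algH (t : F) p q y c0 c1 c2 c3 :
  \det p = 1 -> \det q = 1 -> \det y = 1 -> \det c0 = 1 -> \det c1 = 1 -> \det c2 = 1 -> \det c3 = 1 ->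
  \tr p = t -> \tr q = t -> \tr y = t -> \tr c0 = t -> \tr c1 = t -> \tr c2 = t -> \tr c3 = t ->
  p * y = c0 * c1 -> y^-1 * q = c2 * c3 -> c2 = c1^-1 ->
  \tr (q^-1 * c3) != 2 -> \tr (q^-1 * c3) != t ^+ 2 - 2 ->
  (p^-1 * q^-1 = 1 <->
   (\tr (p^-1 * y^-1) = \tr ((y^-1)^-1 * q^-1) /\
    (\tr (p^-1 * c1) - \tr (c0 * y^-1)) + (\tr ((y^-1)^-1 * c3) - \tr (c2 * q^-1)) = 0)).
Proof.
move=> dp dq dy dc0 dc1 dc2 dc3 tp tq ty tc0 tc1 tc2 tc3 g1 g2 e2 hu1 hu2.
have up := unit_sl2 _ dp; have uq := unit_sl2 _ dq; have uy := unit_sl2 _ dy.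
have uc0 := unit_sl2 _ dc0; have uc1 := unit_sl2 _ dc1; have uc2 := unit_sl2 _ dc2.
have uc3 := unit_sl2 _ dc3.
pose m := c1 * y^-1.
have Ec1 : c1 = m * y by rewrite /m mulrVK.
have Ec0 : c0 = p * m^-1.
  by rewrite /m invrM ?unitrV // invrK mulrA g1 -mulrA mulrV // mulr1.
have Ec3 : c3 = m * q by rewrite /m -mulrA g2 e2 mulVKr.
have dm : \det m = 1 by rewrite /m detM2 ?detV.
have um := unit_sl2 _ dm.
have trm : \tr m = \tr (q^-1 * c3) by rewrite Ec3 (trC q^-1) -mulrA mulrV // mulr1.
have trmy : \tr (m * y) = t by rewrite -Ec1.
have hdet : \det (m * y - y * m) != 0.
  by rewrite detcomm dm dy trmy ty trm det_nonzero.
have eq1 : \tr (p^-1 * y^-1) = \tr ((y^-1)^-1 * q^-1) <-> \tr (p^-1 * y) = \tr (q * y).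
  rewrite invrK !trinvR // trV // (trC y q) tp ty tq.
  by split => [/subrI //|->].
have Ec0i : c0^-1 = m * p^-1 by rewrite Ec0 invrM ?unitrV // invrK.
have eq2 : (\tr (p^-1 * c1) - \tr (c0 * y^-1)) + (\tr ((y^-1)^-1 * c3) - \tr (c2 * q^-1))
    = \tr (p^-1 * (m * y - y * m)) - \tr (q * (m * y - y * m)).
  have -> : c0 * y^-1 = (y * c0^-1)^-1 by rewrite invrM ?unitrV // invrK.
  have -> : c2 * q^-1 = (q * c2^-1)^-1 by rewrite invrM ?unitrV // invrK.
  rewrite !trV ?detM2 ?detV // Ec0i e2 invrK Ec1 Ec3 invrK.
  rewrite !mulrBr !raddfB /= !mulrA.
  rewrite (trC (y * c1 / y) p^-1) (trC (y * c1 / y) q) !mulrA; ring.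
rewrite eq2; split.
  move=> H; have Hp : p^-1 = q by rewrite -[p^-1](mulrVK uq) H mul1r.
  split; last by rewrite Hp subrr.
  by apply/eq1; rewrite Hp.
case=> /eq1 h1 h2; have Hp : p^-1 = q.
  apply: (core (p^-1) q m y); rewrite ?trV ?tp ?tq //.
  - by rewrite trC -Ec0i trC -Ec3 trV // tc0 tc3.
  - by apply/eqP; rewrite -subr_eq0 h2.
by rewrite Hp mulrV.
Qed.
End S.

Section Seqs.
Variable F : comUnitRingType.
Notation M := 'M[F]_2.
Implicit Types l r B : seq M.

Definition rprod l : M := foldr (fun a b => a * b) 1 l.

Lemma rprod_cat l1 l2 : rprod (l1 ++ l2) = rprod l1 * rprod l2.
Proof. by elim: l1 => [|x l1 IH] /=; rewrite ?mul1r // IH mulrA. Qed.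

Lemma split2 l i : (i.+1 < size l)%N ->
  l = take i l ++ [:: nth 0 l i; nth 0 l i.+1] ++ drop i.+2 l.
Proof.
move=> hi; rewrite -{1}(cat_take_drop i l) (drop_nth 0 (ltnW hi)) (drop_nth 0 hi) //.
Qed.

Lemma unit_of (x : M) : inSL2 x -> x \is a GRing.unit.
Proof. by rewrite /inSL2 unitmxE => /eqP ->; rewrite unitr1. Qed.

Lemma mVK (x y : M) : x \is a GRing.unit -> y * x^-1 * x = y.
Proof. by move=> u; rewrite mulrVK. Qed.
Lemma mVKr (x y : M) : x \is a GRing.unit -> x * (x^-1 * y) = y.
Proof. by move=> u; rewrite mulVKr. Qed.
Lemma mV (x : M) : x \is a GRing.unit -> x * x^-1 = 1.
Proof. by move=> u; rewrite mulrV. Qed.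

Lemma step_size m w w' l l' : move_width w m = Some w' -> size l = w ->
  step m l l' -> size l' = w'.
Proof.
case: m => [i [] | i | i] /=.
- case: ifP => // hi [<-] hl ->; rewrite !size_cat size_takel /= ?size_drop; lia.
- case: ifP => // hi [<-] hl ->; rewrite !size_cat size_takel /= ?size_drop; lia.
- case: ifP => // hi [<-] hl [y ->]; rewrite !size_cat size_takel /= ?size_drop; lia.
- case: ifP => // hi [<-] hl [_ ->]; rewrite !size_cat size_takel /= ?size_drop; lia.
Qed.

Lemma step_prod m w w' l l' : move_width w m = Some w' -> size l = w ->
  all (@inSL2 F) l -> all (@inSL2 F) l' -> step m l l' -> rprod l' = rprod l.
Proof.
case: m => [i [] | i | i] /=.
- case: ifP => // hi _ hl al al' E; rewrite -hl in hi.
  rewrite E [in RHS](split2 l i hi) !rprod_cat /= !mulr1.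
  have ua : nth 0 l i \is a GRing.unit by apply/unit_of/(allP al)/mem_nth/ltnW.
  by congr (_ * _); rewrite mulrA (mVK _ _ ua).
- case: ifP => // hi _ hl al al' E; rewrite -hl in hi.
  rewrite E [in RHS](split2 l i hi) !rprod_cat /= !mulr1.
  have ua : nth 0 l i.+1 \is a GRing.unit by apply/unit_of/(allP al)/mem_nth.
  by congr (_ * _); rewrite -!mulrA (mVKr _ _ ua).
- case: ifP => // hi _ hl al al' [y E].
  move: al'; rewrite E all_cat /= => /andP[_ /and3P[hy _ _]].
  by rewrite -[in RHS](cat_take_drop i l) !rprod_cat /= mVKr ?unit_of.
- case: ifP => // hi _ hl al al' [Ei E]; rewrite -hl in hi.
  rewrite E [in RHS](split2 l i hi) !rprod_cat /= !mulr1 Ei.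
  have ua : nth 0 l i \is a GRing.unit by apply/unit_of/(allP al)/mem_nth/ltnW.
  by rewrite mV // mul1r.
Qed.

Lemma takeC l r i : (i <= size l)%N -> take i (l ++ r) = take i l.
Proof. exact: takel_cat. Qed.

Lemma dropC l r i : (i <= size l)%N -> drop i (l ++ r) = drop i l ++ r.
Proof.
move=> hi; rewrite drop_cat; case: ltnP => h //.
have -> : i = size l by apply/eqP; rewrite eqn_leq hi h.
by rewrite subnn drop0 drop_size.
Qed.

Lemma step_left m w w' l1 r l' : move_width w m = Some w' -> size l1 = w ->
  step m (l1 ++ r) l' -> exists2 l1', l' = l1' ++ r & step m l1 l1'.
Proof.
case: m => [i [] | i | i] /=.
- case: ifP => // hi _ hl E; rewrite -hl in hi.
  rewrite !nth_cat !ifT in E; try lia.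
  exists (take i l1 ++ [:: nth 0 l1 i * nth 0 l1 i.+1 * (nth 0 l1 i)^-1; nth 0 l1 i] ++ drop i.+2 l1) => //.
  by rewrite E takeC ?dropC -?catA //; lia.
- case: ifP => // hi _ hl E; rewrite -hl in hi.
  rewrite !nth_cat !ifT in E; try lia.
  exists (take i l1 ++ [:: nth 0 l1 i.+1; (nth 0 l1 i.+1)^-1 * nth 0 l1 i * nth 0 l1 i.+1] ++ drop i.+2 l1) => //.
  by rewrite E takeC ?dropC -?catA //; lia.
- case: ifP => // hi _ hl [y E]; rewrite -hl in hi.
  exists (take i l1 ++ [:: y; y^-1] ++ drop i l1); last by exists y.
  by rewrite E takeC ?dropC -?catA //; lia.
- case: ifP => // hi _ hl [Ei E]; rewrite -hl in hi.
  rewrite !nth_cat !ifT in Ei; try lia.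
  exists (take i l1 ++ drop i.+2 l1) => //.
  by rewrite E takeC ?dropC -?catA //; lia.
Qed.

Lemma step_right m l1 r l' : size r = 2%N ->
  step (shift_move 2 m) (r ++ l1) l' -> exists2 l1', l' = r ++ l1' & step m l1 l1'.
Proof.
move=> hr; case: m => [i [] | i | i] /=.
- rewrite !nth_cat hr !ifF; try lia.
  rewrite take_cat drop_cat hr !ifF; try lia.
  have -> : (i + 2 - 2 = i)%N by lia.
  have -> : ((i + 2).+1 - 2 = i.+1)%N by lia.
  have -> : ((i + 2).+2 - 2 = i.+2)%N by lia.
  move=> E; eexists; first by rewrite E -catA. by [].
- rewrite !nth_cat hr !ifF; try lia.
  rewrite take_cat drop_cat hr !ifF; try lia.
  have -> : (i + 2 - 2 = i)%N by lia.
  have -> : ((i + 2).+1 - 2 = i.+1)%N by lia.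
  have -> : ((i + 2).+2 - 2 = i.+2)%N by lia.
  move=> E; eexists; first by rewrite E -catA. by [].
- rewrite take_cat drop_cat hr !ifF; try lia.
  have -> : (i + 2 - 2 = i)%N by lia.
  move=> [y E]; eexists; first by rewrite E -catA. by exists y.
- rewrite !nth_cat take_cat drop_cat hr !ifF; try lia.
  have -> : (i + 2 - 2 = i)%N by lia.
  have -> : ((i + 2).+1 - 2 = i.+1)%N by lia.
  have -> : ((i + 2).+2 - 2 = i.+2)%N by lia.
  move=> [Ei E]; exists (take i l1 ++ drop i.+2 l1); [by rewrite E -catA | by split].
Qed.

Arguments step_left {m w w' l1 r l'}.
Arguments step_right {m l1 r l'}.
Arguments step_size {m w w' l l'}.
Arguments step_prod {m w w' l l'}.

Lemma chain_left (L : seq (seq M)) s : forall k0 w w' B0 r,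
  word_width w s = Some w' -> size B0 = w -> nth [::] L k0 = B0 ++ r ->
  (forall j, (j <= size s)%N -> all (@inSL2 F) (nth [::] L (k0 + j))) ->
  (forall j, (j < size s)%N ->
     step (nth (Cap 0) s j) (nth [::] L (k0 + j)) (nth [::] L (k0 + j).+1)) ->
  exists B, [/\ nth [::] L (k0 + size s) = B ++ r, size B = w' & rprod B = rprod B0].
Proof.
elim: s => [|m s IH] k0 w w' B0 r /=.
  by move=> [<-] hB hL _ _; exists B0; rewrite addn0.
case Em: (move_width w m) => [w1|] // hw hB hL hsl hst.
have st0 := hst 0%N erefl; rewrite addn0 hL /= in st0.
have [B1 E1 st1] := step_left Em hB st0.
have sz1 := step_size Em hB st1.
have := hsl 0%N erefl; rewrite addn0 hL all_cat => /andP[al0 _].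
have := hsl 1%N erefl; rewrite addn1 E1 all_cat => /andP[al1 _].
have pr := step_prod Em hB al0 al1 st1.
have [||B [h1 h2 h3]] := IH k0.+1 w1 w' B1 r hw sz1 E1.
- by move=> j hj; rewrite addSnnS; apply: hsl.
- by move=> j hj; rewrite addSnnS; apply: (hst j.+1).
by exists B; rewrite -addSnnS h1 h3 pr.
Qed.

Lemma chain_right (L : seq (seq M)) s : forall k0 w w' B0 r,
  word_width w s = Some w' -> size B0 = w -> size r = 2%N -> nth [::] L k0 = r ++ B0 ->
  (forall j, (j <= size s)%N -> all (@inSL2 F) (nth [::] L (k0 + j))) ->
  (forall j, (j < size s)%N ->
     step (shift_move 2 (nth (Cap 0) s j)) (nth [::] L (k0 + j)) (nth [::] L (k0 + j).+1)) ->
  exists B, [/\ nth [::] L (k0 + size s) = r ++ B, size B = w' & rprod B = rprod B0].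
Proof.
elim: s => [|m s IH] k0 w w' B0 r /=.
  by move=> [<-] hB hr hL _ _; exists B0; rewrite addn0.
case Em: (move_width w m) => [w1|] // hw hB hr hL hsl hst.
have st0 := hst 0%N erefl; rewrite addn0 hL /= in st0.
have [B1 E1 st1] := step_right hr st0.
have sz1 := step_size Em hB st1.
have := hsl 0%N erefl; rewrite addn0 hL all_cat => /andP[_ al0].
have := hsl 1%N erefl; rewrite addn1 E1 all_cat => /andP[_ al1].
have pr := step_prod Em hB al0 al1 st1.
have [||B [h1 h2 h3]] := IH k0.+1 w1 w' B1 r hw sz1 hr E1.
- by move=> j hj; rewrite addSnnS; apply: hsl.
- by move=> j hj; rewrite addSnnS; apply: (hst j.+1).
by exists B; rewrite -addSnnS h1 h3 pr.
Qed.
End Seqs.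

Section Main.
Variable R : realType.
Notation C := (R[i]).
Notation M := 'M[C]_2.

Lemma last_take (L : seq (seq M)) n : (n < size L)%N -> last [::] (take n.+1 L) = nth [::] L n.
Proof. by move=> h; rewrite -nth_last size_takel // nth_take. Qed.

Lemma last_drop (L : seq (seq M)) n : (n < size L)%N -> last [::] (drop n L) = last [::] L.
Proof. by move=> h; rewrite -!nth_last nth_drop size_drop; congr nth; lia. Qed.

Lemma lev (t : C) (T : tangle) (L : seq (seq M)) k : is_trace_rep t T L -> (k < size L)%N ->
  all (fun x : M => (\det x == 1) && (\tr x == t)) (nth [::] L k).
Proof.
move=> [[_ _ hsl _] htr] hk; have h1 := hsl k hk; have h2 := htr k hk.
by apply/allP => x hx; apply/andP; split; [exact: (allP h1 x hx) | exact: (allP h2 x hx)].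
Qed.

Lemma partV (t : C) (T1 T2 : tangle) :
  is_tangle T1 -> is_tangle T2 ->
  (forall L : seq (seq M),
     is_trace_rep t (vcomp T1 T2) L ->
     u_inv L != 2 -> u_inv L != t ^+ 2 - 2 ->
     (gd_elt L = 1 <->
        (ud_inv (vres1 T1 L) = ud_inv (vres2 T1 L) /\
         uc_inv (vres1 T1 L) + uc_inv (vres2 T1 L) = 0))).
Proof.
move=> hT1 hT2 L HL hu1 hu2.
have HL' := HL; case: HL' => [[hsz htop hsl hst] htr].
rewrite /vcomp size_cat in hsz hst.
case E0: (nth [::] L 0) htop => [|a0 [|a1 [|]]] // _.
have [|||B [EB sB pB]] := chain_left _ L T1 0 2 2 [:: a0; a1] [::] hT1 erefl.
- by rewrite cats0.
- by move=> j hj; apply: hsl; lia.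
- move=> j hj; have := hst j; rewrite /vcomp nth_cat hj; apply; lia.
case: B EB sB pB => [|a [|b [|]]] // EB _ pB; rewrite cats0 /= in EB.
have [|||B [EC sC pC]] := chain_left _ L T2 (size T1) 2 2 [:: a; b] [::] hT2 erefl.
- by rewrite cats0.
- by move=> j hj; apply: hsl; lia.
- move=> j hj; have := hst (size T1 + j)%N; rewrite /vcomp nth_cat ifF; last by lia.
  rewrite addKn; apply; lia.
case: B EC sC pC => [|c [|d [|]]] // EC _ pC; rewrite cats0 /= in EC.
rewrite /= !mulr1 in pB pC.
have k0 : (0 < size L)%N by rewrite hsz.
have := lev _ _ _ 0 HL k0; rewrite E0 /= => /andP[/andP[/eqP da0 /eqP ta0] /andP[/andP[/eqP da1 /eqP ta1] _]].
have k1 : (size T1 < size L)%N by rewrite hsz; lia.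
have := lev _ _ _ (size T1) HL k1; rewrite EB /= => /andP[/andP[/eqP da /eqP ta] /andP[/andP[/eqP db /eqP tb] _]].
have k2 : (size T1 + size T2 < size L)%N by rewrite hsz.
have := lev _ _ _ (size T1 + size T2)%N HL k2; rewrite EC /= => /andP[/andP[/eqP dc /eqP tc] /andP[/andP[/eqP dd /eqP td] _]].
have Elast : last [::] L = [:: c; d] by rewrite -nth_last hsz /= EC.
move: hu1 hu2.
rewrite /gd_elt /ud_inv /uc_inv /u_inv /x_nw /x_ne /x_sw /x_se /top /bot /vres1 /vres2.
rewrite nth_take // last_take ?hsz //; last by lia.
rewrite last_drop ?hsz //; last by lia.
rewrite nth_drop addn0 Elast E0 EB /=.
move=> hu1 hu2.
apply: (algV _ t a0 a1 a b c d).
all: try done.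
Qed.

Lemma top_map (f : seq M -> seq M) (s : seq (seq M)) : (0 < size s)%N ->
  nth [::] (map f s) 0 = f (nth [::] s 0).
Proof. by move=> h; rewrite (nth_map [::]). Qed.

Lemma last_map' (f : seq M -> seq M) (s : seq (seq M)) : (0 < size s)%N ->
  last [::] (map f s) = f (last [::] s).
Proof. by move=> h; rewrite -!nth_last size_map (nth_map [::]) //; lia. Qed.

Lemma top_td (L : seq (seq M)) n k : (k < size L)%N ->
  nth [::] (take n.+1 (drop k L)) 0 = nth [::] L k.
Proof. by move=> h; rewrite nth_take // nth_drop addn0. Qed.

Lemma last_td (L : seq (seq M)) n k : (k + n < size L)%N ->
  last [::] (take n.+1 (drop k L)) = nth [::] L (k + n).
Proof. by move=> h; rewrite last_take ?nth_drop // size_drop; lia. Qed.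

Lemma size_td (L : seq (seq M)) n k : (k < size L)%N -> (0 < size (take n.+1 (drop k L)))%N.
Proof. by move=> h; rewrite size_take size_drop; case: ifP; lia. Qed.

Lemma partH (t : C) (T1 T2 : tangle) :
  is_tangle T1 -> is_tangle T2 ->
  (forall L : seq (seq M),
     is_trace_rep t (hcomp T1 T2) L ->
     ud_inv L != 2 -> ud_inv L != t ^+ 2 - 2 ->
     (g_elt L = 1 <->
        (u_inv (hres1 T1 L) = u_inv (hres2 T1 T2 L) /\
         uc_inv (hres1 T1 L) + uc_inv (hres2 T1 T2 L) = 0))).
Proof.
move=> hT1 hT2 L HL hu1 hu2.
have HL' := HL; case: HL' => [[hsz htop hsl hst] htr].
have hsz' : size L = (size T1 + size T2 + 3)%N.
  by rewrite hsz /hcomp /= size_cat /= size_cat size_map /=; lia.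
have hn : forall j, (j < size T1)%N -> nth (Cap 0) (hcomp T1 T2) (1 + j) = nth (Cap 0) T1 j.
  by move=> j hj; rewrite /hcomp add1n /= nth_cat hj.
have hn2 : forall j, (j < size T2)%N ->
    nth (Cap 0) (hcomp T1 T2) (1 + size T1 + j) = shift_move 2 (nth (Cap 0) T2 j).
  move=> j hj; rewrite /hcomp -addnA add1n /= nth_cat ifF; last by lia.
  by rewrite addKn nth_cat size_map hj (nth_map (Cap 0)).
have hn3 : nth (Cap 0) (hcomp T1 T2) (1 + size T1 + size T2) = Cap 1.
  rewrite /hcomp -addnA add1n /= nth_cat ifF; last by lia.
  by rewrite addKn nth_cat size_map ltnn subnn.
case E0: (nth [::] L 0) htop => [|p [|q [|]]] // _.
have := hst 0%N; rewrite /hcomp /= E0 => /(_ isT) [y E1].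
have E1' : nth [::] L 1 = [:: p; y] ++ [:: y^-1; q] by rewrite E1.
have [||B [EB sB pB]] := chain_left _ L T1 1 2 2 [:: p; y] [:: y^-1; q] hT1 erefl E1'.
- by move=> j hj; apply: hsl; rewrite hsz'; lia.
- by move=> j hj; rewrite -hn //; apply: hst; rewrite /hcomp /= size_cat /= size_cat size_map; lia.
case: B EB sB pB => [|c0 [|c1 [|]]] // EB _ pB.
have [||B [EC sC pC]] := chain_right _ L T2 (1 + size T1) 2 2 [:: y^-1; q] [:: c0; c1] hT2 erefl erefl EB.
- by move=> j hj; apply: hsl; rewrite hsz'; lia.
- by move=> j hj; rewrite -hn2 //; apply: hst; rewrite /hcomp /= size_cat /= size_cat size_map; lia.
case: B EC sC pC => [|c2 [|c3 [|]]] // EC _ pC.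
have hk : (1 + size T1 + size T2 < size (hcomp T1 T2))%N.
  rewrite /hcomp /= size_cat /= size_cat size_map /=; move: (size T1) (size T2) => a b; rewrite !addnS !addn0; lia.
have := hst _ hk; rewrite hn3 EC /= => -[Ec2 Elast].
rewrite /= !mulr1 in pB pC.
have k0 : (0 < size L)%N by rewrite hsz'; lia.
have := lev _ _ _ 0 HL k0; rewrite E0 /= => /andP[/andP[/eqP dp /eqP tp] /andP[/andP[/eqP dq /eqP tq] _]].
have k1 : (1 < size L)%N by rewrite hsz'; lia.
have := lev _ _ _ 1 HL k1; rewrite E1' /= => /andP[_ /andP[/andP[/eqP dy /eqP ty] _]].
have k2 : (1 + size T1 < size L)%N by rewrite hsz'; lia.
have := lev _ _ _ _ HL k2; rewrite EB /= => /andP[/andP[/eqP dc0 /eqP tc0] /andP[/andP[/eqP dc1 /eqP tc1] _]].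
have k3 : (1 + size T1 + size T2 < size L)%N by rewrite hsz'; lia.
have := lev _ _ _ _ HL k3; rewrite EC /= => /andP[_ /andP[_ /andP[/andP[/eqP dc2 /eqP tc2] /andP[/andP[/eqP dc3 /eqP tc3] _]]]].
have Ht : top L = [:: p; q] by [].
have Hb : bot L = [:: c0; c3].
  rewrite /bot -nth_last hsz' -Elast; congr nth; lia.
have Ht1 : top (hres1 T1 L) = [:: p; y].
  by rewrite /top /hres1 top_map ?size_td ?top_td ?E1' //; lia.
have Hb1 : bot (hres1 T1 L) = [:: c0; c1].
  by rewrite /bot /hres1 last_map' ?size_td ?last_td ?EB //; lia.
have Ht2 : top (hres2 T1 T2 L) = [:: y^-1; q].
  by rewrite /top /hres2 top_map ?size_td ?top_td -?add1n ?EB //; lia.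
have Hb2 : bot (hres2 T1 T2 L) = [:: c2; c3].
  by rewrite /bot /hres2 last_map' ?size_td ?last_td -?add1n ?EC //; lia.
move: hu1 hu2.
rewrite /g_elt /ud_inv /uc_inv /u_inv /x_nw /x_ne /x_sw /x_se Ht Hb Ht1 Hb1 Ht2 Hb2 /=.
move=> hu1 hu2.
exact: (algH _ t p q y c0 c1 c2 c3 dp dq dy dc0 dc1 dc2 dc3 tp tq ty tc0 tc1 tc2 tc3
  (esym pB) (esym pC) Ec2 hu1 hu2).
Qed.
End Main.

Theorem mainTheorem5 (R : realType) (t : R[i]) (T1 T2 : tangle) :
  t != 0 -> is_tangle T1 -> is_tangle T2 ->
  (forall L : seq (seq 'M[R[i]]_2),
     is_trace_rep t (vcomp T1 T2) L ->
     u_inv L != 2 -> u_inv L != t ^+ 2 - 2 ->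
     (gd_elt L = 1 <->
        (ud_inv (vres1 T1 L) = ud_inv (vres2 T1 L) /\
         uc_inv (vres1 T1 L) + uc_inv (vres2 T1 L) = 0)))
  /\
  (forall L : seq (seq 'M[R[i]]_2),
     is_trace_rep t (hcomp T1 T2) L ->
     ud_inv L != 2 -> ud_inv L != t ^+ 2 - 2 ->
     (g_elt L = 1 <->
        (u_inv (hres1 T1 L) = u_inv (hres2 T1 T2 L) /\
         uc_inv (hres1 T1 L) + uc_inv (hres2 T1 T2 L) = 0))).
Proof.
move=> _ hT1 hT2; split; [exact: partV | exact: partH].
Qed.
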